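(* Let $f:\mathbb{R}^d\to\mathbb{R}$ be twice differentiable and suppose there is $M>0$ with $\|\nabla^2 f(x)-\nabla^2 f(y)\|_{\mathrm{op}}\le M\|x-y\|$ for all $x,y$. Let $(x_k)_{k\in\mathbb{N}}$ be generated by the inner iteration described in the context. Then for all $k\ge1$, $$\|\nabla f(\bar x_k)\|\le\|\bar g_k\|+\frac{M}{8}kS_k.$$
   Context: Inner iteration (parameters $\sigma,\delta>0$, $\theta\in(0,1)$): given $x_0\in\mathbb{R}^d$ and a real symmetric matrix $B_0$, for $k=0,1,\dots$: let $m_k(s):=\langle \nabla f(x_k)+\frac{1}{k+1}\sum_{i=0}^k(2i+1)\nabla f(x_i),s\rangle+\frac12\langle B_ks,s\rangle+\frac{\sigma}{4}\|s\|^4$; choose any $s_k$ with $\|\nabla m_k(s_k)\|\le\delta\|s_k\|$; set $x_{k+1}=x_k+s_k$, $r_k=\nabla f(x_{k+1})-\nabla f(x_k)-B_ks_k$, and $B_{k+1}=\frac{1-\theta}{1+\theta}\big(B_k+\frac{r_ks_k^\top+s_kr_k^\top}{\|s_k\|^2}-\frac{\langle r_k,s_k\rangle}{\|s_k\|^4}s_ks_k^\top\big)$. Definitions for $k\ge1$: $\bar x_k:=\frac{1}{k(k+1)}\big(\sum_{i=0}^{k-1}(2i+1)x_i+kx_k\big)$, $\bar g_k:=\frac{1}{k(k+1)}\big(\sum_{i=0}^{k-1}(2i+1)\nabla f(x_i)+k\nabla f(x_k)\big)$, and $S_k:=\sum_{i=0}^{k-1}\|s_i\|^2$. *)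

(* Defs.v *)
From HB Require Import structures.
From mathcomp Require Import all_boot all_order all_algebra.
From mathcomp Require Import all_classical all_reals all_analysis.
Set Implicit Arguments. Unset Strict Implicit. Unset Printing Implicit Defensive.
Import Order.TTheory GRing.Theory Num.Theory.
Import numFieldNormedType.Exports.
Local Open Scope classical_set_scope.
Local Open Scope ring_scope.

Section Defs.
Variables (R : realType) (d : nat).
Notation vec := 'cV[R]_d.

Definition dotp (u v : vec) : R := \sum_(i < d) u i 0 * v i 0.
Definition enorm (v : vec) : R := Num.sqrt (dotp v v).

Definition opnorm (A : 'M[R]_d) : R :=
  sup [set enorm (A *m v) | v in [set v : vec | enorm v <= 1]].

Definition grad (f : vec -> R) (x : vec) : vec :=
  \col_(i < d) ('d f x (delta_mx i 0 : vec)).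

(* Hessian: hess f x i j = d/dx_j (d f / dx_i) *)
Definition hess (f : vec -> R) (x : vec) : 'M[R]_d :=
  \matrix_(i < d, j < d) (('d (grad f) x (delta_mx j 0 : vec)) i 0).

Definition twice_differentiable (f : vec -> R) : Prop :=
  forall x, differentiable f x /\ differentiable (grad f) x.

Definition model (f : vec -> R) (sigma : R) (x : nat -> vec) (B : nat -> 'M[R]_d)
    (k : nat) (s : vec) : R :=
  dotp (grad f (x k) + (k.+1%:R)^-1 *: \sum_(i < k.+1) (2 * i + 1)%:R *: grad f (x i)) s
  + 2^-1 * dotp (B k *m s) s + sigma / 4 * enorm s ^+ 4.

Definition resid (f : vec -> R) (x : nat -> vec) (s : nat -> vec) (B : nat -> 'M[R]_d)
    (k : nat) : vec :=
  grad f (x k.+1) - grad f (x k) - B k *m s k.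

Definition Bupdate (theta : R) (Bk : 'M[R]_d) (r s : vec) : 'M[R]_d :=
  ((1 - theta) / (1 + theta)) *:
    (Bk + (enorm s ^+ 2)^-1 *: (r *m s^T + s *m r^T)
        - (dotp r s / enorm s ^+ 4) *: (s *m s^T)).

Definition inner_iteration (f : vec -> R) (sigma delta theta : R)
    (x s : nat -> vec) (B : nat -> 'M[R]_d) : Prop :=
  [/\ (B 0%N)^T = B 0%N,
      forall k, enorm (grad (model f sigma x B k) (s k)) <= delta * enorm (s k),
      forall k, x k.+1 = x k + s k &
      forall k, B k.+1 = Bupdate theta (B k) (resid f x s B k) (s k)].

Definition xbar (x : nat -> vec) (k : nat) : vec :=
  ((k * k.+1)%:R)^-1 *: (\sum_(i < k) (2 * i + 1)%:R *: x i + k%:R *: x k).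

Definition gbar (f : vec -> R) (x : nat -> vec) (k : nat) : vec :=
  ((k * k.+1)%:R)^-1 *: (\sum_(i < k) (2 * i + 1)%:R *: grad f (x i) + k%:R *: grad f (x k)).

Definition Ssum (s : nat -> vec) (k : nat) : R := \sum_(i < k) enorm (s i) ^+ 2.

End Defs.

(* Main.v *)
Require Import Defs.
From HB Require Import structures.
From mathcomp Require Import all_boot all_order all_algebra.
From mathcomp Require Import all_classical all_reals all_analysis.
From mathcomp Require Import ring lra zify.
Set Implicit Arguments. Unset Strict Implicit. Unset Printing Implicit Defensive.
Import Order.TTheory GRing.Theory Num.Theory.
Import numFieldNormedType.Exports.
Local Open Scope classical_set_scope.
Local Open Scope ring_scope.

Section Eucl.
Variables (R : realType) (d : nat).
Notation vec := 'cV[R]_d.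
Implicit Types u v w : vec.

Lemma dotpC u v : dotp u v = dotp v u.
Proof. by rewrite /dotp; apply: eq_bigr => i _; rewrite mulrC. Qed.

Lemma dotpDl u v w : dotp (u + v) w = dotp u w + dotp v w.
Proof. by rewrite /dotp -big_split; apply: eq_bigr => i _; rewrite !mxE mulrDl. Qed.

Lemma dotpZl a u v : dotp (a *: u) v = a * dotp u v.
Proof. by rewrite /dotp mulr_sumr; apply: eq_bigr => i _; rewrite !mxE mulrA. Qed.

Lemma dotpNl u v : dotp (- u) v = - dotp u v.
Proof. by rewrite -scaleN1r dotpZl mulN1r. Qed.

Lemma dotpBl u v w : dotp (u - v) w = dotp u w - dotp v w.
Proof. by rewrite dotpDl dotpNl. Qed.

Lemma dotpDr u v w : dotp w (u + v) = dotp w u + dotp w v.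
Proof. by rewrite dotpC dotpDl !(dotpC w). Qed.
Lemma dotpZr a u v : dotp v (a *: u) = a * dotp v u.
Proof. by rewrite dotpC dotpZl dotpC. Qed.
Lemma dotpBr u v w : dotp w (u - v) = dotp w u - dotp w v.
Proof. by rewrite dotpC dotpBl !(dotpC w). Qed.
Lemma dotp0l u : dotp 0 u = 0.
Proof. by rewrite -(scale0r (0:vec)) dotpZl mul0r. Qed.
Lemma dotp0r u : dotp u 0 = 0.
Proof. by rewrite dotpC dotp0l. Qed.

Lemma dotp_suml I (r : seq I) (P : pred I) (F : I -> vec) v :
  dotp (\sum_(i <- r | P i) F i) v = \sum_(i <- r | P i) dotp (F i) v.
Proof.
elim/big_rec2: _ => [|i y1 y2 _ <-]; first by rewrite dotp0l.
by rewrite dotpDl.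
Qed.
Lemma dotp_sumr I (r : seq I) (P : pred I) (F : I -> vec) v :
  dotp v (\sum_(i <- r | P i) F i) = \sum_(i <- r | P i) dotp v (F i).
Proof. by rewrite dotpC dotp_suml; apply: eq_bigr => i _; rewrite dotpC. Qed.

Lemma dotp_ge0 u : 0 <= dotp u u.
Proof. by apply: sumr_ge0 => i _; rewrite -expr2 sqr_ge0. Qed.

Lemma enorm_ge0 u : 0 <= enorm u.
Proof. exact: sqrtr_ge0. Qed.

Lemma enorm_sq u : enorm u ^+ 2 = dotp u u.
Proof. by rewrite /enorm sqr_sqrtr // dotp_ge0. Qed.

Lemma enorm0 : enorm (0:vec) = 0.
Proof. by rewrite /enorm dotp0l sqrtr0. Qed.

Lemma enormZ a u : enorm (a *: u) = `|a| * enorm u.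
Proof.
by rewrite /enorm dotpZl dotpZr mulrA -expr2 sqrtrM ?sqrtr_sqr // sqr_ge0.
Qed.

Lemma enormN u : enorm (- u) = enorm u.
Proof. by rewrite -scaleN1r enormZ normrN normr1 mul1r. Qed.

Lemma enormB u v : enorm (u - v) = enorm (v - u).
Proof. by rewrite -enormN opprB. Qed.

Lemma CS u v : dotp u v <= enorm u * enorm v.
Proof.
have [u0|unz] := eqVneq (dotp u u) 0.
  have : forall i, u i 0 = 0.
    move=> i; apply/eqP; rewrite -sqrf_eq0; apply/eqP.
    move: u0; rewrite /dotp => /eqP; rewrite psumr_eq0; last by move=> j _; rewrite -expr2 sqr_ge0.
    by move/allP => /(_ i (mem_index_enum _)) /= /eqP; rewrite expr2.
  move=> H; rewrite /dotp big1 ?mulr_ge0 ?enorm_ge0 // => i _.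
  by rewrite H mul0r.
set a := dotp u u; set b := dotp u v; set c := dotp v v.
have apos : 0 < a by rewrite lt0r unz dotp_ge0.
have key : 0 <= a * c - b ^+ 2.
  have := dotp_ge0 (a *: v - b *: u).
  rewrite !dotpBl !dotpBr !dotpZl !dotpZr -/a -/c (dotpC v u) -/b.
  have -> : a * (a * c) - a * (b * b) - (b * (a * b) - b * (b * a)) = a * (a * c - b ^+ 2) by ring.
  by rewrite pmulr_rge0.
have [bn|bp] := lerP b 0.
  by apply: le_trans bn _; rewrite mulr_ge0 ?enorm_ge0.
rewrite /enorm -sqrtrM ?dotp_ge0 // -/a -/c -(ger0_norm (ltW bp)) -sqrtr_sqr.
by rewrite ler_wsqrtr // -subr_ge0.
Qed.

Lemma CSabs u v : `|dotp u v| <= enorm u * enorm v.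
Proof.
rewrite ler_norml CS andbT lerNl -dotpNl.
by apply: le_trans (CS _ _) _; rewrite enormN.
Qed.

Lemma enorm_le u y : 0 <= y -> dotp u u <= y ^+ 2 -> enorm u <= y.
Proof.
move=> y0 h; rewrite /enorm -(ger0_norm y0) -sqrtr_sqr.
by rewrite ler_wsqrtr.
Qed.

Lemma enormD u v : enorm (u + v) <= enorm u + enorm v.
Proof.
apply: enorm_le; first by rewrite addr_ge0 ?enorm_ge0.
rewrite dotpDl !dotpDr sqrrD !enorm_sq (dotpC v u).
have := CS u v; lra.
Qed.

Lemma enorm_sum I (r : seq I) (P : pred I) (F : I -> vec) :
  enorm (\sum_(i <- r | P i) F i) <= \sum_(i <- r | P i) enorm (F i).
Proof.
apply: (big_ind2 (fun a b => enorm a <= b)) => //.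
  by rewrite enorm0.
by move=> a1 b1 a2 b2 h1 h2; apply: le_trans (enormD _ _) _; exact: lerD.
Qed.

Lemma single_le_sum n (a : 'I_n -> R) i : (forall j, 0 <= a j) -> a i <= \sum_j a j.
Proof.
move=> h; rewrite (bigD1 i) //= lerDl; exact: sumr_ge0.
Qed.

Lemma coord_le_enorm u i : `|u i 0| <= enorm u.
Proof.
rewrite -sqrtr_sqr /enorm ler_wsqrtr // /dotp expr2.
by apply: (@single_le_sum _ (fun j => u j 0 * u j 0)) => j; rewrite -expr2 sqr_ge0.
Qed.

Lemma enorm_le_l1 u : enorm u <= \sum_i `|u i 0|.
Proof.
apply: enorm_le; first by apply: sumr_ge0.
rewrite /dotp expr2 mulr_suml; apply: ler_sum => i _.
apply: le_trans (ler_norm _) _; rewrite normrM.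
rewrite ler_wpM2l //; exact: (@single_le_sum _ (fun j => `|u j 0|)).
Qed.


Lemma mulmx_coord (A : 'M[R]_d) v i : (A *m v) i 0 = \sum_j A i j * v j 0.
Proof. by rewrite mxE. Qed.

Lemma opnorm_ub (A : 'M[R]_d) v : enorm v <= 1 ->
  enorm (A *m v) <= \sum_i \sum_j `|A i j|.
Proof.
move=> v1; apply: le_trans (enorm_le_l1 _) _; apply: ler_sum => i _.
rewrite mxE; apply: le_trans (ler_norm_sum _ _ _) _; apply: ler_sum => j _.
rewrite normrM ler_piMr //; exact: le_trans (coord_le_enorm _ _) v1.
Qed.

Lemma opnorm_bound (A : 'M[R]_d) v : enorm (A *m v) <= opnorm A * enorm v.
Proof.
have hub : has_ubound [set enorm (A *m v) | v in [set v : vec | enorm v <= 1]].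
  exists (\sum_i \sum_j `|A i j|) => _ [w /= w1 <-]; exact: opnorm_ub.
have [v0|vnz] := eqVneq (enorm v) 0.
  have -> : v = 0.
    apply/matrixP => i j; rewrite (ord1 j) mxE; apply/eqP; rewrite -normr_eq0 eq_le normr_ge0 andbT.
    by rewrite -v0 coord_le_enorm.
  by rewrite mulmx0 enorm0 mulr0.
have vpos : 0 < enorm v by rewrite lt0r vnz enorm_ge0.
have := ub_le_sup hub; move/ubP => /(_ (enorm (A *m ((enorm v)^-1 *: v)))).
rewrite -ler_pdivrMr // mulrC.
move=> h.
have -> : (enorm v)^-1 * enorm (A *m v) = enorm (A *m ((enorm v)^-1 *: v)).
  by rewrite -scalemxAr enormZ ger0_norm ?invr_ge0 ?enorm_ge0.
apply: h; exists ((enorm v)^-1 *: v) => //=.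
by rewrite enormZ ger0_norm ?invr_ge0 ?enorm_ge0 // mulVf.
Qed.

End Eucl.

Section Taylor.
Variables (R : realType) (d : nat).
Notation vec := 'cV[R]_d.

Lemma coord_diffE m n (N0 : 'M[R]_(m, n)) i j :
  'd (fun N : 'M[R]_(m, n) => N i j) N0 = (fun N => N i j) :> (_ -> _).
Proof.
have @g : {linear 'M[R]_(m, n) -> R}.
  by exists (fun N : 'M[R]_(_, _) => N i j); do 2![eexists]; do ?[constructor];
     rewrite ?mxE// => ? *; rewrite ?mxE//; move=> ?; rewrite !mxE.
rewrite (_ : (fun _ => _) = g) //; rewrite diff_lin //; exact: coord_continuous.
Qed.

Variable f : vec -> R.
Hypothesis hf : twice_differentiable f.

Lemma hess_mul x (u : vec) : hess f x *m u = 'd (grad f) x u.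
Proof.
apply/matrixP => i j; rewrite (ord1 j) {j}.
rewrite mxE [in RHS](_ : u = \sum_k u k 0 *: (delta_mx k 0 : vec)); last first.
  by rewrite {1}(matrix_sum_delta u); apply: eq_bigr => k _; rewrite big_ord1.
rewrite linear_sum summxE; apply: eq_bigr => k _.
by rewrite linearZ !mxE mulrC.
Qed.

Lemma dline (y u : vec) (t : R) :
  is_diff t (fun s : R => y + s *: u) (fun s : R => s *: u).
Proof.
have h : is_diff t (cst y + ( *:%R ^~ u)) (0 + ( *:%R ^~ u)) by exact: is_diffD.
apply: DiffDef; first exact: (@ex_diff _ _ _ _ _ _ _ h).
have := @diff_val _ _ _ _ _ _ _ h => /= ->.
by apply/funext => s /=; rewrite add0r.
Qed.

Lemma dGi (y u : vec) (t : R) i :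
  is_derive t 1 (fun s : R => grad f (y + s *: u) i 0)
    ('d (grad f) (y + t *: u) u i 0).
Proof.
set h := fun s : R => y + s *: u.
have dh := dline y u t.
have d1 : differentiable (grad f \o h) t.
  apply: differentiable_comp; first exact: ex_diff.
  exact: (hf _).2.
have d2 : differentiable ((fun N : vec => N i 0) \o (grad f \o h)) t.
  by apply: differentiable_comp => //; exact: differentiable_coord.
apply: DeriveDef; first exact: diff_derivable d2.
rewrite deriveE //.
have -> : (fun s : R => grad f (y + s *: u) i 0) = (fun N : vec => N i 0) \o (grad f \o h) by [].
rewrite (diff_comp d1 (differentiable_coord _ _ _)).
rewrite coord_diffE /=.
rewrite (diff_comp (ex_diff : differentiable h t) ((hf _).2)).
by rewrite /= (@diff_val _ _ _ _ _ _ _ dh) scale1r.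
Qed.


Lemma poly_der (a K s : R) :
  is_derive s 1 ((id * cst a + cst K * (id * id)) : R -> R) (a + K * (2 * s)).
Proof.
apply: is_derive_eq.
rewrite !scaler0 addr0 /= /GRing.scale /= !mulr1.
ring.
Qed.


Lemma phi_der (e y u : vec) (s : R) :
  is_derive s 1 (fun r : R => \sum_i e i 0 * grad f (y + r *: u) i 0)
    (\sum_i e i 0 * ('d (grad f) (y + s *: u) u i 0)).
Proof.
have h : is_derive s 1 (\sum_i (e i 0 \*: (fun r : R => grad f (y + r *: u) i 0)))
    (\sum_i e i 0 *: 'd (grad f) (y + s *: u) u i 0).
  by apply: is_derive_sum => i; apply: is_deriveZ; exact: dGi.
have -> : (fun r : R => \sum_i e i 0 * grad f (y + r *: u) i 0) =
   \sum_i (e i 0 \*: (fun r : R => grad f (y + r *: u) i 0)).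
  by rewrite fct_sumE.
exact: h.
Qed.


Lemma aux_lin (p1 p2 p3 a K c : R) : p3 - a <= K * (2 * c) ->
  p1 - (1 * a + K * (1 * 1)) - (p2 - (0 * a + K * (0 * 0))) = p3 - (a + K * (2 * c)) ->
  p1 - p2 - a <= K.
Proof. move=> h1 h2; lra. Qed.

Lemma aux_fin (ne M nu : R) : ne ^+ 2 <= ne * M * nu ^+ 2 / 2 -> 0 < ne -> ne <= M / 2 * nu ^+ 2.
Proof.
move=> h h0; rewrite -(ler_pM2l h0).
have -> : ne * (M / 2 * nu ^+ 2) = ne * M * nu ^+ 2 / 2 by ring.
by rewrite -expr2.
Qed.

Lemma taylor_grad (M : R) : 0 <= M ->
  (forall y z : vec, opnorm (hess f y - hess f z) <= M * enorm (y - z)) ->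
  forall y z : vec, enorm (grad f z - grad f y - hess f y *m (z - y)) <= M / 2 * enorm (z - y) ^+ 2.
Proof.
move=> M0 hL y z.
set u := z - y.
set e := grad f z - grad f y - hess f y *m u.
set a := dotp e (hess f y *m u).
set K := enorm e * M * enorm u ^+ 2 / 2.
pose phi := fun r : R => \sum_i e i 0 * grad f (y + r *: u) i 0.
pose psi := (phi - ((id * cst a + cst K * (id * id)) : R -> R)) : R -> R.
have Dpsi : forall r : R, is_derive r 1 psi
   (\sum_i e i 0 * ('d (grad f) (y + r *: u) u i 0) - (a + K * (2 * r))).
  move=> r; apply: is_deriveB; [exact: phi_der | exact: poly_der].
have [c c01 hc] := @MVT_segment _ psi _ 0 1 ler01 (fun r _ => Dpsi r)
   (derivable_within_continuous (fun r _ => @ex_derive _ _ _ _ _ _ _ (Dpsi r))).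
have ev : forall r, psi r = dotp e (grad f (y + r *: u)) - (r * a + K * (r * r)) by [].
move: hc; rewrite subr0 mulr1 !ev scale0r addr0 scale1r.
have -> : y + u = z by rewrite /u addrC subrK.
rewrite -/(dotp e ('d (grad f) (y + c *: u) u)) -hess_mul.
have he : dotp e (grad f z) - dotp e (grad f y) - a = enorm e ^+ 2.
  by rewrite enorm_sq {3}/e !dotpBr.
have c0 : 0 <= c by move: c01; rewrite in_itv /= => /andP[].
have c1 : c <= 1 by move: c01; rewrite in_itv /= => /andP[].
have hb : dotp e (hess f (y + c *: u) *m u) - a <= K * (2 * c).
  rewrite /a -dotpBr -mulmxBl.
  apply: le_trans (CS _ _) _.
  apply: le_trans (ler_wpM2l (enorm_ge0 _) (opnorm_bound _ _)) _.
  have hL' : opnorm (hess f (y + c *: u) - hess f y) <= M * (c * enorm u).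
    have eu : y + c *: u - y = c *: u by rewrite addrC addKr.
    by have := hL (y + c *: u) y; rewrite eu enormZ (ger0_norm c0).
  apply: le_trans (ler_wpM2l (enorm_ge0 e) (ler_wpM2r (enorm_ge0 u) hL')) _.
  rewrite /K; move: (enorm e) (enorm u) => ne nu.
  by rewrite le_eqVlt; apply/orP; left; apply/eqP; field.
move=> hc.
have hK : enorm e ^+ 2 <= K by rewrite -he; exact: aux_lin hb hc.
have [e0|enz] := eqVneq (enorm e) 0.
  by rewrite e0 mulr_ge0 ?sqr_ge0 // divr_ge0.
have ep : 0 < enorm e by rewrite lt0r enz enorm_ge0.
rewrite /K in hK; exact: (aux_fin hK ep).
Qed.

End Taylor.

Definition b2r {R : realType} (c : bool) : R := if c then 1 else 0.

Section Var.
Variables (R : realType) (d : nat).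
Notation vec := 'cV[R]_d.

Lemma b2r_ge0 c : 0 <= (b2r c : R).
Proof. by rewrite /b2r; case: c. Qed.
Lemma b2r_sq c : (b2r c : R) ^+ 2 = b2r c.
Proof. by rewrite /b2r; case: c; rewrite ?expr1n ?expr0n. Qed.
Lemma b2r_norm c : `|(b2r c : R)| = b2r c.
Proof. by rewrite ger0_norm // b2r_ge0. Qed.

Lemma sum_sq n (b : 'I_n -> R) : (\sum_l b l) ^+ 2 <= n%:R * \sum_l b l ^+ 2.
Proof.
pose bv : 'cV[R]_n := \col_l b l.
pose one : 'cV[R]_n := const_mx 1.
have h := CSabs one bv.
have e1 : dotp one bv = \sum_l b l.
  by rewrite /dotp; apply: eq_bigr => l _; rewrite !mxE mul1r.
have e2 : dotp one one = n%:R.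
  rewrite /dotp (eq_bigr (fun _ => 1)); last by move=> l _; rewrite !mxE mulr1.
  by rewrite sumr_const card_ord.
have e3 : dotp bv bv = \sum_l b l ^+ 2.
  by rewrite /dotp; apply: eq_bigr => l _; rewrite !mxE expr2.
rewrite -e1 -e2 -e3 -!enorm_sq -exprMn -real_normK ?num_real //.
rewrite !expr2; apply: ler_pM => //; exact: normr_ge0.
Qed.

Lemma diff_sum (p s : nat -> vec) (ps : forall l, p l.+1 = p l + s l) k i j :
  (i <= j <= k)%N -> p j - p i = \sum_(l < k) b2r ((i <= l) && (l < j))%N *: s l.
Proof.
move=> /andP[ij jk].
rewrite -(@telescope_sumr_eq _ _ _ p s) //; last by move=> l _; rewrite ps [p l + _]addrC addrK.
rewrite (big_nat_widen _ _ _ _ _ jk) (big_nat_widenl _ _ _ _ _ (leq0n i)) big_mkcond big_mkord.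
apply: eq_bigr => l _; rewrite /b2r /= andbC.
by case: ifP => _; rewrite ?scale1r ?scale0r.
Qed.


Lemma ind_eq (i j l : nat) : (i <= j)%N ->
  (b2r ((i <= l) && (l < j))%N : R) = b2r (i <= l)%N * b2r (l < j)%N + b2r (j <= l)%N * b2r (l < i)%N.
Proof.
move=> ij; rewrite /b2r; case: (leqP i l) => il; case: (leqP j l) => jl /=;
  rewrite ?mulr1 ?mul1r ?mulr0 ?mul0r ?addr0 ?add0r //; exfalso; lia.
Qed.

Lemma dist_bound (p s : nat -> vec) (ps : forall l, p l.+1 = p l + s l) k (i j : 'I_k.+1) :
  enorm (p i - p j) ^+ 2 <= k%:R * \sum_(l < k)
    (b2r (i <= l)%N * b2r (l < j)%N + b2r (j <= l)%N * b2r (l < i)%N) * enorm (s l) ^+ 2.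
Proof.
wlog ij : i j / (i <= j)%N.
  move=> H; case: (leqP i j) => [/H //|/ltnW ji].
  have -> : \sum_(l < k) (b2r (i <= l)%N * b2r (l < j)%N + b2r (j <= l)%N * b2r (l < i)%N) * enorm (s l) ^+ 2
    = \sum_(l < k) (b2r (j <= l)%N * b2r (l < i)%N + b2r (i <= l)%N * b2r (l < j)%N) * enorm (s l) ^+ 2.
    by apply: eq_bigr => l _; rewrite addrC.
  by rewrite enormB; exact: H.
have jk : (j <= k)%N by rewrite -ltnS.
rewrite enormB (@diff_sum p s ps k i j); last by rewrite ij jk.
set S := \sum_(l < k) b2r ((i <= l) && (l < j))%N * enorm (s l).
have h1 : enorm (\sum_(l < k) b2r ((i <= l) && (l < j))%N *: s l) <= S.
  apply: le_trans (enorm_sum _ _ _) _; rewrite le_eqVlt; apply/orP; left; apply/eqP.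
  by apply: eq_bigr => l _; rewrite enormZ b2r_norm.
have h2 := sum_sq (fun l : 'I_k => b2r ((i <= l) && (l < j))%N * enorm (s l)).
apply: (@le_trans _ _ (S ^+ 2)).
  by rewrite !expr2; apply: ler_pM => //; exact: enorm_ge0.
apply: le_trans h2 _; rewrite le_eqVlt; apply/orP; left; apply/eqP; congr (_ * _).
by apply: eq_bigr => l _; rewrite exprMn b2r_sq ind_eq.
Qed.

Lemma var_identity k (w : nat -> R) (p : nat -> vec) :
  \sum_(i < k.+1) w i = 1 ->
  let pb := \sum_(j < k.+1) w j *: p j in
  2 * \sum_(i < k.+1) w i * enorm (p i - pb) ^+ 2 =
  \sum_(i < k.+1) \sum_(j < k.+1) w i * w j * enorm (p i - p j) ^+ 2.
Proof.
move=> w1 pb.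
pose q i := p i - pb.
pose Q i := dotp (q i) (q i).
have sq : \sum_(j < k.+1) w j *: q j = 0.
  rewrite /q (eq_bigr (fun j : 'I_k.+1 => w j *: p j - w j *: pb)); last by move=> j _; rewrite scalerBr.
  by rewrite sumrB -scaler_suml w1 scale1r subrr.
have pq : forall i j, p i - p j = q i - q j.
  by move=> i j; rewrite /q opprB addrA subrK.
set V := \sum_(i < k.+1) w i * enorm (p i - pb) ^+ 2.
have hV : V = \sum_(j < k.+1) w j * Q j by apply: eq_bigr => j _; rewrite enorm_sq.
have row : forall i : 'I_k.+1, \sum_(j < k.+1) w j * enorm (p i - p j) ^+ 2 = Q i + V.
  move=> i.
  rewrite (eq_bigr (fun j : 'I_k.+1 => w j * Q i - 2 * dotp (q i) (w j *: q j) + w j * Q j)); last first.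
    move=> j _; rewrite pq enorm_sq /Q; move: (q i) (q j) => a b.
    rewrite dotpBl !dotpBr dotpZr (dotpC b a).
    by ring.
  rewrite big_split sumrB /= -mulr_suml w1 mul1r -mulr_sumr -dotp_sumr sq dotp0r mulr0 subr0.
  by rewrite hV.
rewrite (eq_bigr (fun i : 'I_k.+1 => w i * (Q i + V))); last first.
  by move=> i _; rewrite -row mulr_sumr; apply: eq_bigr => j _; rewrite mulrA.
rewrite (eq_bigr (fun i : 'I_k.+1 => w i * Q i + w i * V)); last by move=> i _; rewrite mulrDr.
by rewrite big_split /= -mulr_suml w1 mul1r -hV mulr2n mulrDl mul1r.
Qed.

Lemma T_bound k (w : nat -> R) (l : nat) :
  \sum_(i < k.+1) w i = 1 ->
  \sum_(i < k.+1) \sum_(j < k.+1) w i * w j *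
     (b2r (i <= l)%N * b2r (l < j)%N + b2r (j <= l)%N * b2r (l < i)%N) <= 2^-1.
Proof.
move=> w1.
set A := \sum_(i < k.+1) w i * b2r (i <= l)%N.
set B := \sum_(j < k.+1) w j * b2r (l < j)%N.
have AB : A + B = 1.
  rewrite -big_split /= -w1; apply: eq_bigr => i _; rewrite -mulrDr /b2r.
  by case: leqP => _; rewrite ?addr0 ?add0r mulr1.
have -> : \sum_(i < k.+1) \sum_(j < k.+1) w i * w j *
     (b2r (i <= l)%N * b2r (l < j)%N + b2r (j <= l)%N * b2r (l < i)%N) =
   \sum_(i < k.+1) \sum_(j < k.+1) (w i * b2r (i <= l)%N) * (w j * b2r (l < j)%N) +
   \sum_(j < k.+1) \sum_(i < k.+1) (w j * b2r (j <= l)%N) * (w i * b2r (l < i)%N).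
  rewrite [X in _ = _ + X]exchange_big -big_split /=; apply: eq_bigr => i _.
  rewrite -big_split /=; apply: eq_bigr => j _; ring.
rewrite -!big_distrlr /= -/A -/B.
have h := sqr_ge0 (A - B).
have eB : B = 1 - A by rewrite -AB addrC addKr.
rewrite eB; rewrite eB in h.
have -> : A * (1 - A) + A * (1 - A) = 2^-1 - 2 * (2^-1 - A) ^+ 2.
  by rewrite !expr2; field.
rewrite lerBlDr lerDl mulr_ge0 ?sqr_ge0 //.
Qed.

Lemma var_bound (p s : nat -> vec) (ps : forall l, p l.+1 = p l + s l) k (w : nat -> R) :
  (forall i, 0 <= w i) -> \sum_(i < k.+1) w i = 1 ->
  \sum_(i < k.+1) w i * enorm (p i - \sum_(j < k.+1) w j *: p j) ^+ 2
    <= k%:R / 4 * \sum_(l < k) enorm (s l) ^+ 2.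
Proof.
move=> w0 w1.
have I := var_identity p w1.
set V := \sum_(i < k.+1) w i * enorm (p i - \sum_(j < k.+1) w j *: p j) ^+ 2 in I *.
set S := \sum_(l < k) enorm (s l) ^+ 2.
pose c (i j : 'I_k.+1) (l : 'I_k) : R :=
  b2r (i <= l)%N * b2r (l < j)%N + b2r (j <= l)%N * b2r (l < i)%N.
suff h : 2 * V <= 2 * (k%:R / 4 * S) by rewrite ler_pM2l in h.
rewrite I.
apply: (@le_trans _ _ (\sum_(i < k.+1) \sum_(j < k.+1) w i * w j *
          (k%:R * \sum_(l < k) c i j l * enorm (s l) ^+ 2))).
  apply: ler_sum => i _; apply: ler_sum => j _.
  by apply: ler_wpM2l; [rewrite mulr_ge0 | exact: dist_bound].
have -> : \sum_(i < k.+1) \sum_(j < k.+1) w i * w j *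
          (k%:R * \sum_(l < k) c i j l * enorm (s l) ^+ 2) =
   \sum_(l < k) (k%:R * enorm (s l) ^+ 2) *
      (\sum_(i < k.+1) \sum_(j < k.+1) w i * w j * c i j l).
  rewrite (eq_bigr (fun i : 'I_k.+1 => \sum_(l < k) \sum_(j < k.+1)
      (k%:R * enorm (s l) ^+ 2) * (w i * w j * c i j l))); last first.
    move=> i _; rewrite exchange_big /=; apply: eq_bigr => j _.
    rewrite mulr_sumr mulr_sumr; apply: eq_bigr => l _; ring.
  rewrite exchange_big /=; apply: eq_bigr => l _.
  by rewrite mulr_sumr; apply: eq_bigr => i _; rewrite mulr_sumr.
apply: (@le_trans _ _ (\sum_(l < k) (k%:R * enorm (s l) ^+ 2) * 2^-1)).
  apply: ler_sum => l _; apply: ler_wpM2l; first by rewrite mulr_ge0 ?sqr_ge0.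
  exact: T_bound.
rewrite -mulr_suml -mulr_sumr /S.
rewrite le_eqVlt; apply/orP; left; apply/eqP.
move: (\sum_(i < k) _) => t; by field.
Qed.
End Var.


Lemma sum_odd k : (\sum_(i < k) (2 * i + 1) = k * k)%N.
Proof.
elim: k => [|k IH]; first by rewrite big_ord0.
by rewrite big_ord_recr /= IH; lia.
Qed.

Lemma vec_id (V : zmodType) (a b c : V) : b + c = a - (a - b - c).
Proof. by rewrite opprB opprB addrCA [a + _]addrC subrK addrC. Qed.

Lemma term_id (R : realType) (d : nat) (a : R) (g gb xi xb : 'cV[R]_d) (H : 'M[R]_d) :
  a *: gb + H *m (a *: (xi - xb)) = a *: g - a *: (g - gb - H *m (xi - xb)).
Proof. by rewrite -scalemxAr -scalerDr -scalerBr -vec_id. Qed.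


Local Close Scope classical_set_scope.
Unset Implicit Arguments.

Theorem lemma4p2 (R : realType) (d : nat) (f : 'cV[R]_d -> R) (M : R)
  (sigma delta theta : R) (x s : nat -> 'cV[R]_d) (B : nat -> 'M[R]_d) :
  twice_differentiable f ->
  0 < M ->
  (forall y z : 'cV[R]_d, opnorm (hess f y - hess f z) <= M * enorm (y - z)) ->
  0 < sigma -> 0 < delta -> 0 < theta < 1 ->
  inner_iteration f sigma delta theta x s B ->
  forall k : nat, (1 <= k)%N ->
    enorm (grad f (xbar x k))
      <= enorm (gbar f x k) + M / 8 * k%:R * Ssum s k.
Proof.
move=> hf M0 hL _ _ _ it k k1.
have [_ _ xs _] := it.
have kk0 : ((k * k.+1)%:R : R) != 0 by rewrite pnatr_eq0 muln_eq0 negb_or; apply/andP; split => //; lia.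
pose w (i : nat) : R := if (i < k)%N then (2 * i + 1)%:R / (k * k.+1)%:R else k%:R / (k * k.+1)%:R.
have w0 : forall i, 0 <= w i.
  by move=> i; rewrite /w; case: ifP => _; rewrite divr_ge0.
have conv : forall p : nat -> 'cV[R]_d,
    ((k * k.+1)%:R)^-1 *: (\sum_(i < k) (2 * i + 1)%:R *: p i + k%:R *: p k)
    = \sum_(i < k.+1) w i *: p i.
  move=> p; rewrite big_ord_recr /= scalerDr scaler_sumr; congr (_ + _).
    by apply: eq_bigr => i _; rewrite scalerA /w ltn_ord mulrC.
  by rewrite scalerA /w ltnn mulrC.
have wsum : \sum_(i < k.+1) w i = 1.
  rewrite big_ord_recr /= /w ltnn.
  rewrite (eq_bigr (fun i : 'I_k => (2 * i + 1)%:R / (k * k.+1)%:R)); last by move=> i _; rewrite ltn_ord.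
  rewrite -mulr_suml -mulrDl -natr_sum sum_odd -natrD.
  by rewrite (_ : (k * k + k = k * k.+1)%N) ?mulfV //; lia.
rewrite /xbar /gbar (conv x) (conv (fun i => grad f (x i))) /Ssum.
set xb := \sum_(i < k.+1) w i *: x i.
set H := hess f xb.
pose err i := grad f (x i) - grad f xb - H *m (x i - xb).
have hz : \sum_(i < k.+1) w i *: (x i - xb) = 0.
  rewrite (eq_bigr (fun j : 'I_k.+1 => w j *: x j - w j *: xb)); last by move=> j _; rewrite scalerBr.
  by rewrite sumrB -scaler_suml wsum scale1r subrr.
have key : grad f xb = \sum_(i < k.+1) w i *: grad f (x i) - \sum_(i < k.+1) w i *: err i.
  rewrite -sumrB.
  have e1 : grad f xb = \sum_(i < k.+1) w i *: grad f xb + H *m \sum_(i < k.+1) w i *: (x i - xb).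
    by rewrite hz mulmx0 addr0 -scaler_suml wsum scale1r.
  rewrite {1}e1 mulmx_sumr -big_split; apply: eq_bigr => i _.
  exact: term_id.
rewrite key.
apply: le_trans (enormD _ _) _; rewrite enormN lerD2l.
apply: le_trans (enorm_sum _ _ _) _.
apply: (@le_trans _ _ (\sum_(i < k.+1) w i * (M / 2 * enorm (x i - xb) ^+ 2))).
  apply: ler_sum => i _; rewrite enormZ ger0_norm // ler_wpM2l //.
  by have := taylor_grad hf (ltW M0) hL xb (x i); apply.
rewrite (eq_bigr (fun i : 'I_k.+1 => M / 2 * (w i * enorm (x i - xb) ^+ 2))); last first.
  by move=> i _; rewrite mulrCA.
rewrite -mulr_sumr.
have hv := var_bound xs w0 wsum.
apply: le_trans (ler_wpM2l _ hv) _; first by rewrite divr_ge0 // ltW.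
rewrite le_eqVlt; apply/orP; left; apply/eqP.
move: (\sum_(l < k) _) => t; by field.
Qed.
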